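(* Let $\mathcal C$ be a Suslin scheme in a topological space $Y$ consisting of closed subsets of $Y$, and let $T$ be a nonempty well-founded tree with leaf rank $r_l(T)=\lambda+n$ ($\lambda$ limit or $0$, $n\in\omega$). Then (i) $\mathbf R_T(\mathcal C)\in\mathcal F_{\lambda+2n}(Y)$; (ii) if $T\ne\{\emptyset\}$ and $\mathrm{ims}_T(\emptyset)$ is finite, then $n\ge1$ and $\mathbf R_T(\mathcal C)\in\mathcal F_{\lambda+2n-1}(Y)$.
   Context: $\mathcal F$-Borel hierarchy: $\mathcal F_0(Y)$ closed sets; for $0<\alpha<\omega_1$, $\mathcal F_\alpha(Y)$ = countable unions (odd $\alpha$) or countable intersections (even $\alpha$) of members of $\bigcup_{\beta<\alpha}\mathcal F_\beta(Y)$, with $\lambda+m$ ($\lambda$ limit or 0) having the parity of $m$. A tree is a subset of $\omega^{<\omega}$ closed under initial segments, well-founded if it has no infinite branch; $\mathrm{ims}_T(t)=\{t^\frown n\in T\}$, $T^t=\{t':t^\frown t'\in T\}$; leaf rank $r_l(T^t)=\sup\{r_l(T^s)+1:s\in\mathrm{ims}_T(t)\}$ ($\sup\emptyset=0$), $r_l(T)=r_l(T^\emptyset)$. A Suslin scheme is a family $(C(s))_{s\in\omega^{<\omega}}$ with $C(t)\subset C(s)$ whenever $t$ extends $s$. A map $\varphi:T\to\omega^{<\omega}$ is admissible if it is monotone w.r.t. extension and $|\varphi(t)|=t(0)+\dots+t(k)$ for $t=(t(0),\dots,t(k))$. $\mathbf R_T(\mathcal C)=\{x\in C(\emptyset):\exists$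 admissible $\varphi:T\to\omega^{<\omega}$ with $x\in C(\varphi(t))$ for all $t\in T\}$. *)

(* Defs.v *)
From mathcomp Require Import all_boot.
Set Implicit Arguments. Unset Strict Implicit. Unset Printing Implicit Defensive.

Record topology (Y : Type) := Topology {
  open : (Y -> Prop) -> Prop;
  open_full : open (fun _ => True);
  open_union : forall (I : Type) (U : I -> Y -> Prop),
      (forall i, open (U i)) -> open (fun y => exists i, U i y);
  open_inter : forall U V, open U -> open V -> open (fun y => U y /\ V y);
  open_ext : forall U V, (forall y, U y <-> V y) -> open U -> open V
}.

Definition is_closed (Y : Type) (tau : topology Y) (A : Y -> Prop) : Prop :=
  open tau (fun y => ~ A y).

Inductive ord : Type :=
| OZ : ord
| OS : ord -> ord
| OL : (nat -> ord) -> ord.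

(* the standard order on Brouwer trees (Kraus--Nordvall Forsberg--Xu) *)
Inductive ole : ord -> ord -> Prop :=
| ole_zero b : ole OZ b
| ole_trans a b c : ole a b -> ole b c -> ole a c
| ole_succ a b : ole a b -> ole (OS a) (OS b)
| ole_cocone a f k : ole a (f k) -> ole a (OL f)
| ole_limiting f b : (forall k, ole (f k) b) -> ole (OL f) b.

Definition olt (a b : ord) : Prop := ole (OS a) b.
Definition oeq (a b : ord) : Prop := ole a b /\ ole b a.

Definition oadd (l : ord) (m : nat) : ord := iter m OS l.

Definition limit_or_zero (l : ord) : Prop :=
  forall b, olt b l -> olt (OS b) l.

Definition odd_ord (a : ord) : Prop :=
  exists l m, limit_or_zero l /\ oeq a (oadd l m) /\ odd m.

Inductive Fclass (Y : Type) (tau : topology Y) : ord -> (Y -> Prop) -> Prop :=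
| F_zero a A : ole a OZ -> is_closed tau A -> Fclass tau a A
| F_union a A (b : nat -> ord) (B : nat -> Y -> Prop) :
    olt OZ a -> odd_ord a ->
    (forall k, olt (b k) a) -> (forall k, Fclass tau (b k) (B k)) ->
    (forall y, A y <-> exists k, B k y) -> Fclass tau a A
| F_inter a A (b : nat -> ord) (B : nat -> Y -> Prop) :
    olt OZ a -> ~ odd_ord a ->
    (forall k, olt (b k) a) -> (forall k, Fclass tau (b k) (B k)) ->
    (forall y, A y <-> forall k, B k y) -> Fclass tau a A.

Definition is_tree (T : pred (seq nat)) : Prop :=
  forall s t, T (s ++ t) -> T s.

Definition well_founded_tree (T : pred (seq nat)) : Prop :=
  ~ exists f : nat -> nat, forall k, T (mkseq f k).

(* leaf_rank T t a : a is the leaf rank r_l(T^t), computed recursively: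
   sup { r_l(T^(t^k)) + 1 : t^k in T }  (sup of empty = 0) *)
Inductive leaf_rank (T : pred (seq nat)) : seq nat -> ord -> Prop :=
| lr_node t (r : nat -> ord) :
    (forall k, T (rcons t k) -> leaf_rank T (rcons t k) (r k)) ->
    leaf_rank T t (OL (fun k => if T (rcons t k) then OS (r k) else OZ)).

Definition suslin_scheme (Y : Type) (C : seq nat -> Y -> Prop) : Prop :=
  forall s t y, C (s ++ t) y -> C s y.

Definition admissible (T : pred (seq nat)) (phi : seq nat -> seq nat) : Prop :=
  (forall s t, T s -> T t -> prefix s t -> prefix (phi s) (phi t)) /\
  (forall t, T t -> size (phi t) = sumn t).

Definition R_T (Y : Type) (T : pred (seq nat)) (C : seq nat -> Y -> Prop)
  (y : Y) : Prop :=
  C [::] y /\ exists phi, admissible T phi /\ forall t, T t -> C (phi t) y.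

(* Main.v *)
Require Import Defs.
From mathcomp Require Import all_boot.
From Stdlib Require Import Classical ClassicalEpsilon.
From mathcomp Require Import zify.
Set Implicit Arguments. Unset Strict Implicit. Unset Printing Implicit Defensive.

Fixpoint le' (a b : ord) {struct a} : Prop :=
  match a with
  | OZ => True
  | OS a' => (fix lt (b : ord) : Prop := match b with
                 | OZ => False
                 | OS b' => le' a' b'
                 | OL g => exists k, lt (g k) end) b
  | OL f => forall k, le' (f k) b
  end.

Definition lt' a b := le' (OS a) b.

Lemma lt'_Z a : lt' a OZ = False. Proof. reflexivity. Qed.
Lemma lt'_S a b : lt' a (OS b) = le' a b. Proof. reflexivity. Qed.
Lemma lt'_L a g : lt' a (OL g) = exists k, lt' a (g k). Proof. reflexivity. Qed.
Lemma le'_S a b : le' (OS a) b = lt' a b. Proof. reflexivity. Qed.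
Lemma le'_L f b : le' (OL f) b = forall k, le' (f k) b. Proof. reflexivity. Qed.

Lemma le'_cocone x g k : le' x (g k) -> le' x (OL g).
Proof.
elim: x => [|x IH|f IH]; first by [].
- rewrite !le'_S lt'_L => H; exists k; exact H.
- move=> H j; apply: IH; exact: H.
Qed.

Lemma le'_refl a : le' a a.
Proof.
elim: a => [|a IH|f IH]; first by [].
- by rewrite le'_S lt'_S.
- rewrite le'_L => k; apply: (@le'_cocone _ _ k); exact: IH.
Qed.

Lemma le'_trans_all a :
  (forall b c, le' a b -> le' b c -> le' a c) /\
  (forall b c, le' a b -> lt' b c -> lt' a c) /\
  (forall b c, lt' a b -> le' b c -> lt' a c).
Proof.
have T1 : forall a, (forall b c, le' a b -> le' b c -> le' a c) ->
     (forall b c, le' a b -> lt' b c -> lt' a c) /\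
     (forall b c, lt' a b -> le' b c -> lt' a c).
  move=> x T1x.
  have T3 : forall b c, le' x b -> lt' b c -> lt' x c.
    move=> b c; elim: c => [|c IH|h IH].
    - by rewrite lt'_Z.
    - rewrite !lt'_S; exact: T1x.
    - rewrite !lt'_L => Hxb [k Hk]; exists k; exact: IH.
  split; first exact: T3.
  move=> b c; elim: b c => [|b IH|g IH] c.
  - by rewrite lt'_Z.
  - rewrite lt'_S le'_S; exact: T3.
  - rewrite lt'_L le'_L => [[k Hk]] H; exact: (IH k c Hk (H k)).
elim: a => [|a IH|f IH].
- have H1 : forall b c, le' OZ b -> le' b c -> le' OZ c by [].
  by split; [exact H1 | exact: T1].
- have H1 : forall b c, le' (OS a) b -> le' b c -> le' (OS a) c.
    move=> b c; rewrite !le'_S; exact: (proj2 (proj2 IH)).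
  by split; [exact H1 | exact: T1].
- have H1 : forall b c, le' (OL f) b -> le' b c -> le' (OL f) c.
    move=> b c; rewrite !le'_L => H H' k; exact: (proj1 (IH k) _ _ (H k) H').
  by split; [exact H1 | exact: T1].
Qed.

Lemma le'_trans a b c : le' a b -> le' b c -> le' a c.
Proof. exact: (proj1 (le'_trans_all a)). Qed.
Lemma le'_lt'_trans a b c : le' a b -> lt' b c -> lt' a c.
Proof. exact: (proj1 (proj2 (le'_trans_all a))). Qed.

Lemma ole_le' a b : ole a b -> le' a b.
Proof.
elim => {a b}.
- by [].
- move=> a b c _ H1 _ H2; exact: le'_trans H1 H2.
- by move=> a b _ H; rewrite le'_S lt'_S.
- move=> a f k _ H; exact: le'_cocone H.
- by move=> f b _ H; rewrite le'_L.
Qed.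

Lemma le'_ole a b : le' a b -> ole a b.
Proof.
elim: a b => [|a IH|f IH] b.
- by constructor.
- rewrite le'_S; elim: b => [|b IHb|g IHg].
  + by rewrite lt'_Z.
  + rewrite lt'_S => H; apply: ole_succ; exact: IH.
  + rewrite lt'_L => [[k Hk]]; apply: (ole_cocone (k:=k)); exact: IHg.
- rewrite le'_L => H; apply: ole_limiting => k; exact: IH.
Qed.

Lemma ole_refl a : ole a a.
Proof. apply: le'_ole; exact: le'_refl. Qed.

Lemma lt'_irrefl a : ~ lt' a a.
Proof.
elim: a => [|a IH|f IH].
- by rewrite lt'_Z.
- by rewrite lt'_S le'_S.
- rewrite lt'_L => [[k Hk]].
  apply: (IH k); apply: le'_lt'_trans Hk.
  apply: (@le'_cocone _ _ k); exact: le'_refl.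
Qed.

Lemma olt_irrefl a : ~ olt a a.
Proof. move=> /ole_le' H; exact: (@lt'_irrefl a H). Qed.

Lemma ole_S_inv a b : ole (OS a) (OS b) -> ole a b.
Proof. move=> /ole_le'; rewrite le'_S lt'_S; exact: le'_ole. Qed.

Lemma not_S_le_Z a : ~ ole (OS a) OZ.
Proof. by move=> /ole_le'; rewrite le'_S lt'_Z. Qed.

Lemma olt_L_inv b f : olt b (OL f) -> exists k, olt b (f k).
Proof.
move=> /ole_le'; rewrite le'_S lt'_L => [[k Hk]]; exists k; exact: le'_ole.
Qed.

Lemma le'_total_first_second a :
  (forall b, le' a b \/ lt' b a) -> forall b, lt' a b \/ le' b a.
Proof.
move=> F; elim => [|b IH|g IH].
- by right.
- rewrite lt'_S le'_S; exact: F.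
- rewrite lt'_L le'_L.
  case: (classic (exists k, lt' a (g k))) => [H|H]; first by left.
  right => k; case: (IH k) => // Hk; exfalso; apply: H; by exists k.
Qed.

Lemma le'_total a : forall b, le' a b \/ lt' b a.
Proof.
elim: a => [|a IH|f IH] b.
- by left.
- rewrite le'_S lt'_S. exact: le'_total_first_second IH b.
- rewrite le'_L lt'_L.
  case: (classic (forall k, le' (f k) b)) => [H|H]; first by left.
  right; move: H => /not_all_ex_not [k Hk].
  exists k; case: (IH k b) => //.
Qed.

Lemma ole_total a b : ole a b \/ olt b a.
Proof.
case: (le'_total a b) => H; [left; exact: le'_ole | right; exact: le'_ole].
Qed.

Lemma ole_cases a b : ole b a -> oeq b a \/ olt b a.
Proof.
move=> H; case: (ole_total a b) => H'; [left; by split | by right].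
Qed.

Lemma oeq_refl a : oeq a a. Proof. split; exact: ole_refl. Qed.
Lemma oeq_sym a b : oeq a b -> oeq b a. Proof. by case. Qed.
Lemma oeq_trans a b c : oeq a b -> oeq b c -> oeq a c.
Proof. case=> H1 H2 [H3 H4]; split; apply: ole_trans; eassumption. Qed.

Lemma ole_S a : ole a (OS a).
Proof. apply: le'_ole; elim: a => [|a IH|f IH]; first by [].
- by rewrite le'_S lt'_S.
- rewrite le'_L => k. apply: le'_trans (IH k) _.
  rewrite le'_S lt'_S. apply: (@le'_cocone _ _ k); exact: le'_refl.
Qed.

Lemma olt_ole a b : olt a b -> ole a b.
Proof. move=> H; exact: ole_trans (ole_S a) H. Qed.

Lemma oaddS l m : oadd l m.+1 = OS (oadd l m). Proof. reflexivity. Qed.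
Lemma oadd0 l : oadd l 0 = l. Proof. reflexivity. Qed.
Lemma oaddD l m p : oadd l (m + p) = oadd (oadd l p) m.
Proof. by rewrite /oadd iterD. Qed.

Lemma ole_oadd x m : ole x (oadd x m).
Proof. elim: m => [|m IH]; first exact: ole_refl. rewrite oaddS; exact: ole_trans IH (ole_S _). Qed.

Lemma oadd_mono x y m : ole x y -> ole (oadd x m) (oadd y m).
Proof. move=> H; elim: m => [|m IH] //; rewrite !oaddS; exact: ole_succ. Qed.

Lemma limit_oadd l x m : limit_or_zero l -> olt x l -> olt (oadd x m) l.
Proof. move=> Hl Hx; elim: m => [|m IH] //; rewrite oaddS; exact: Hl. Qed.

Lemma limit_not_S l x : limit_or_zero l -> ~ oeq l (OS x).
Proof.
move=> Hl [H1 H2].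
have Hx : olt x l by exact: H2.
have := Hl _ Hx; rewrite /olt => H3.
apply: (@olt_irrefl x); apply: ole_S_inv; exact: ole_trans H3 H1.
Qed.

Lemma oeq_S_inv a b : oeq (OS a) (OS b) -> oeq a b.
Proof. by case=> H1 H2; split; apply: ole_S_inv. Qed.

Lemma oadd_uniq l l' i j : limit_or_zero l -> limit_or_zero l' ->
  oeq (oadd l i) (oadd l' j) -> i = j.
Proof.
move=> Hl Hl'; elim: i j => [|i IH] [|j] //.
- rewrite oaddS oadd0 => H; exfalso; exact: limit_not_S Hl H.
- rewrite oaddS oadd0 => H; exfalso; exact: (limit_not_S Hl' (oeq_sym H)).
- rewrite !oaddS => /oeq_S_inv H; congr S; exact: IH.
Qed.

Lemma odd_ord_oeq a b : oeq a b -> odd_ord a -> odd_ord b.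
Proof.
move=> H [l [m [Hl [Hm Ho]]]]; exists l, m; split => //; split => //.
exact: oeq_trans (oeq_sym H) Hm.
Qed.

Lemma not_odd_even l n : limit_or_zero l -> ~ odd_ord (oadd l (2 * n)).
Proof.
move=> Hl [l' [m [Hl' [Hm Ho]]]].
have E := oadd_uniq Hl Hl' Hm. by rewrite -E mul2n odd_double in Ho.
Qed.

Lemma odd_odd l n : limit_or_zero l -> odd_ord (oadd l (2 * n).+1).
Proof.
move=> Hl; exists l, (2 * n).+1; split => //; split; first exact: oeq_refl.
by rewrite /= mul2n odd_double.
Qed.

Lemma decomp a : exists l n, limit_or_zero l /\ oeq a (oadd l n).
Proof.
elim: a => [|a IH|f IH].
- exists OZ, 0; split; last exact: oeq_refl.
  move=> b Hb; exfalso; exact: not_S_le_Z Hb.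
- case: IH => l [n [Hl He]]; exists l, n.+1; split => //.
  rewrite oaddS; case: He => H1 H2; split; exact: ole_succ.
- case: (classic (limit_or_zero (OL f))) => Hlim.
  + exists (OL f), 0; split => //; exact: oeq_refl.
  + move: Hlim; rewrite /limit_or_zero => /not_all_ex_not [b Hb']. have [Hb Hnb] := imply_to_and _ _ Hb'.
    case: (olt_L_inv Hb) => k Hk.
    case: (ole_total (OL f) (OS b)) => [H1|H1]; last by exfalso; exact: Hnb H1.
    case: (IH k) => l [n [Hl He]]; exists l, n; split => //.
    apply: (oeq_trans _ He); split.
    * exact: ole_trans H1 Hk.
    * exact: (ole_cocone (k:=k) (ole_refl _)).
Qed.

Lemma lemA l' n' l n : limit_or_zero l' -> limit_or_zero l ->
  ole (oadd l' n'.+1) (oadd l n) -> ole (oadd l' (2 * n').+2) (oadd l (2 * n)).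
Proof.
move=> Hl' Hl; elim: n n' => [|n IH] n'.
- rewrite oadd0 => H.
  have Hx : olt (oadd l' n') l by exact: H.
  have := limit_oadd (n'.+2) Hl Hx; rewrite /olt -oaddD => H2.
  apply: ole_trans _ H2.
  apply: ole_trans _ (ole_S _).
  have -> : (2 * n').+2 = (n'.+2 + n') by lia.
  exact: ole_refl.
- rewrite oaddS => /ole_S_inv.
  have -> : 2 * n.+1 = (2 * n).+2 by lia.
  case: n' => [|n'] H.
  + rewrite !oaddS; do 2 apply: ole_succ.
    rewrite oadd0 in H; apply: ole_trans H _.
    have -> : 2 * n = n + n by lia.
    rewrite oaddD; exact: ole_oadd.
  + have -> : (2 * n'.+1).+2 = ((2 * n').+2).+2 by lia.
    rewrite !oaddS; do 2 apply: ole_succ. rewrite -!oaddS; exact: IH.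
Qed.

Section Top.
Variable (Y : Type) (tau : topology Y).

Lemma closed_empty : is_closed tau (fun _ : Y => False).
Proof. apply: (open_ext _ (open_full tau)) => y; split => // _ []. Qed.

Lemma closed_inter (B : nat -> Y -> Prop) :
  (forall m, is_closed tau (B m)) -> is_closed tau (fun y => forall m, B m y).
Proof.
move=> H; rewrite /is_closed.
apply: (open_ext _ (open_union (U := fun m y => ~ B m y) H)) => y; split.
- by move=> [m Hm] Hall; apply: Hm.
- move=> Hn; apply: not_all_ex_not; exact: Hn.
Qed.

Lemma closed_ext (A A' : Y -> Prop) :
  (forall y, A y <-> A' y) -> is_closed tau A -> is_closed tau A'.
Proof.
move=> E H; apply: (open_ext _ H) => y; split => Hn Ha; apply: Hn; exact/E.
Qed.

Lemma Fclass_ext a (A A' : Y -> Prop) :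
  (forall y, A y <-> A' y) -> Fclass tau a A -> Fclass tau a A'.
Proof.
move=> E H; case: H A' E => {a A} [a A Hz Hc | a A b B H1 H2 H3 H4 H5 | a A b B H1 H2 H3 H4 H5] A' E.
- apply: F_zero => //; exact: closed_ext Hc.
- apply: (F_union H1 H2 H3 H4) => y; rewrite -E; exact: H5.
- apply: (F_inter H1 H2 H3 H4) => y; rewrite -E; exact: H5.
Qed.

Lemma closed_any a (A : Y -> Prop) : is_closed tau A -> Fclass tau a A.
Proof.
move=> Hc; case: (ole_total a OZ) => Ha; first exact: F_zero.
have H0 : forall k : nat, Fclass tau ((fun _ => OZ) k) ((fun _ => A) k).
  move=> k; apply: F_zero => //; exact: ole_refl.
case: (classic (odd_ord a)) => Ho.
- apply: (F_union Ha Ho _ H0) => //; by move=> y; split => [H|[]]; [exists 0|].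
- apply: (F_inter Ha Ho _ H0) => //; by move=> y; split => [H|H]; [|exact: (H 0)].
Qed.

Lemma Fclass_oeq b a (A : Y -> Prop) : Fclass tau b A -> oeq b a -> Fclass tau a A.
Proof.
move=> H; case: H a => {b A} [b A Hz Hc | b A c B H1 H2 H3 H4 H5 | b A c B H1 H2 H3 H4 H5] a [E1 E2].
- apply: F_zero => //; exact: ole_trans E2 Hz.
- apply: (F_union (b := c) (B := B)) => //.
  + exact: ole_trans H1 E1.
  + exact: odd_ord_oeq (conj E1 E2) H2.
  + move=> k; exact: ole_trans (H3 k) E1.
- apply: (F_inter (b := c) (B := B)) => //.
  + exact: ole_trans H1 E1.
  + move=> Ho; apply: H2; exact: odd_ord_oeq (conj E2 E1) Ho.
  + move=> k; exact: ole_trans (H3 k) E1.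
Qed.

Lemma Fclass_mono b a (A : Y -> Prop) : Fclass tau b A -> ole b a -> Fclass tau a A.
Proof.
move=> H Hba; case: (ole_cases Hba) => [E|Hlt]; first exact: Fclass_oeq H E.
have Ha : olt OZ a by apply: ole_trans _ Hlt; apply: ole_succ; apply: ole_zero.
have H0 : forall k : nat, Fclass tau ((fun _ => b) k) ((fun _ => A) k) by [].
case: (classic (odd_ord a)) => Ho.
- apply: (F_union Ha Ho _ H0) => //; by move=> y; split => [H'|[]]; [exists 0|].
- apply: (F_inter Ha Ho _ H0) => //; by move=> y; split => [H'|H']; [|exact: (H' 0)].
Qed.

Lemma Fclass_Z_closed b (A : Y -> Prop) : Fclass tau b A -> ole b OZ -> is_closed tau A.
Proof.
case=> {b A} [b A Hz Hc | b A c B H1 H2 H3 H4 H5 | b A c B H1 H2 H3 H4 H5] Hb //.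
- exfalso; exact: not_S_le_Z (ole_trans H1 Hb).
- exfalso; exact: not_S_le_Z (ole_trans H1 Hb).
Qed.

Lemma Fclass_inv_even a (A : Y -> Prop) : Fclass tau a A -> olt OZ a -> ~ odd_ord a ->
  exists (b : nat -> ord) (B : nat -> Y -> Prop), (forall k, olt (b k) a) /\
   (forall k, Fclass tau (b k) (B k)) /\ (forall y, A y <-> forall k, B k y).
Proof.
case=> {a A} [a A Hz Hc | a A c B H1 H2 H3 H4 H5 | a A c B H1 H2 H3 H4 H5] Ha Ho.
- exfalso; exact: not_S_le_Z (ole_trans Ha Hz).
- by exfalso.
- by exists c, B.
Qed.

Lemma inter_even a (B : nat -> Y -> Prop) : ~ odd_ord a ->
  (forall m, exists b, ole b a /\ Fclass tau b (B m)) ->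
  Fclass tau a (fun y => forall m, B m y).
Proof.
move=> Ho HB; case: (ole_total a OZ) => Ha.
  apply: F_zero => //; apply: closed_inter => m.
  case: (HB m) => b [Hb HF]; exact: Fclass_Z_closed HF (ole_trans Hb Ha).
have H' : forall m, exists p : (nat -> ord) * (nat -> Y -> Prop),
    (forall j, olt (p.1 j) a /\ Fclass tau (p.1 j) (p.2 j)) /\
    (forall y, B m y <-> forall j, p.2 j y).
  move=> m; case: (HB m) => b [Hb HF]; case: (ole_cases Hb) => [E|Hlt].
  - case: (Fclass_inv_even (Fclass_oeq HF E) Ha Ho) => c [C [H1 [H2 H3]]].
    by exists (c, C).
  - exists ((fun _ => b), (fun _ => B m)) => /=; split => // y.
    by split => [H j|H]; [|exact: (H 0)].
pose pp m := proj1_sig (constructive_indefinite_description _ (H' m)).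
have Hpp m := proj2_sig (constructive_indefinite_description _ (H' m)).
pose q n := odflt (0, 0) (unpickle n : option (nat * nat)).
apply: (F_inter (b := fun n => (pp (q n).1).1 (q n).2)
                (B := fun n => (pp (q n).1).2 (q n).2)) => //.
- move=> n; exact: (proj1 ((proj1 (Hpp (q n).1)) (q n).2)).
- move=> n; exact: (proj2 ((proj1 (Hpp (q n).1)) (q n).2)).
- move=> y; split.
  + move=> H n; exact: (proj1 (proj2 (Hpp (q n).1) y) (H _)).
  + move=> H m; apply/(proj2 (Hpp m) y) => j.
    have := H (pickle (m, j)); rewrite /q pickleK /=; exact.
Qed.

End Top.

Definition Tsub (T : pred (seq nat)) (t : seq nat) : pred (seq nat) :=
  fun u => T (t ++ u).
Definition Dsh (Y : Type) (D : seq nat -> Y -> Prop) (s : seq nat) :=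
  fun u => D (s ++ u).

Lemma decompR (Y : Type) (T : pred (seq nat)) t (D : seq nat -> Y -> Prop) y :
  is_tree T ->
  R_T (Tsub T t) D y <-> D [::] y /\ forall k, T (rcons t k) ->
     exists s, size s = k /\ R_T (Tsub T (rcons t k)) (Dsh D s) y.
Proof.
move=> HT; split.
- move=> [HD [phi [[Hmon Hsz] Hc]]]; split => // k Hk.
  have Sk : Tsub T t [:: k] by rewrite /Tsub cats1.
  have Hs : size (phi [:: k]) = k by rewrite Hsz //= addn0.
  have Su : forall u, Tsub T (rcons t k) u -> Tsub T t (k :: u).
    by move=> u; rewrite /Tsub cat_rcons.
  have key : forall u, Tsub T (rcons t k) u ->
      exists c, phi (k :: u) = phi [:: k] ++ c.
    move=> u Hu.
    have := Hmon [:: k] (k :: u) Sk (Su _ Hu) (prefix_prefix [:: k] u).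
    by case/prefixP => c ->; exists c.
  exists (phi [:: k]); split => //; split.
    rewrite /Dsh cats0; exact: Hc.
  exists (fun u => drop k (phi (k :: u))); split; first split.
  + move=> u v Hu Hv Huv.
    have := Hmon (k :: u) (k :: v) (Su _ Hu) (Su _ Hv).
    rewrite /= eqxx /= => /(_ Huv).
    case: (key u Hu) => cu ->; case: (key v Hv) => cv ->.
    rewrite !drop_size_cat // prefix_catr // eqxx /=; exact.
  + move=> u Hu; rewrite size_drop Hsz; last exact: Su.
    by rewrite /= addKn.
  + move=> u Hu; have := Hc _ (Su _ Hu); rewrite /Dsh.
    by case: (key u Hu) => c ->; rewrite drop_size_cat.
- move=> [HD H].
  have H' : forall k, exists p : seq nat * (seq nat -> seq nat),
      T (rcons t k) -> size p.1 = k /\ admissible (Tsub T (rcons t k)) p.2 /\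
      (forall u, Tsub T (rcons t k) u -> D (p.1 ++ p.2 u) y).
    move=> k; case E: (T (rcons t k)).
    + case: (H k E) => s [Hs [_ [psi [Ha Hc]]]]; by exists (s, psi).
    + by exists ([::], id).
  pose sel k := proj1_sig (constructive_indefinite_description _ (H' k)).
  have Hsel k := proj2_sig (constructive_indefinite_description _ (H' k)).
  have child : forall k u, Tsub T t (k :: u) -> T (rcons t k) /\ Tsub T (rcons t k) u.
    move=> k u; rewrite /Tsub -cat_rcons => Hu; split => //; exact: HT Hu.
  split => //.
  exists (fun u => match u with [::] => [::] | k :: u' => (sel k).1 ++ (sel k).2 u' end).
  split; first split.
  + move=> [|k u] [|k' v] //= Hu Hv.
    by move=> _; apply/prefixP; exists ((sel k').1 ++ (sel k').2 v).
    case/andP => /eqP Ek Huv; subst k'.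
    case: (child _ _ Hu) => Hk Hu'; case: (child _ _ Hv) => _ Hv'.
    case: (Hsel k Hk) => _ [[Hmon _] _].
    rewrite prefix_catr // eqxx /=; exact: (Hmon _ _ Hu' Hv' Huv).
  + move=> [|k u] //= Hu.
    case: (child _ _ Hu) => Hk Hu'; case: (Hsel k Hk) => Hs [[_ Hsz] _].
    by rewrite size_cat Hs Hsz.
  + move=> [|k u] //= Hu.
    case: (child _ _ Hu) => Hk Hu'; case: (Hsel k Hk) => _ [_ Hc]; exact: Hc.
Qed.

Lemma Dsh_closed (Y : Type) (tau : topology Y) (D : seq nat -> Y -> Prop) s :
  (forall s, is_closed tau (D s)) -> forall u, is_closed tau (Dsh D s u).
Proof. by move=> H u; exact: H. Qed.

Lemma child_bound (T : pred (seq nat)) t (r : nat -> ord) k l n :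
  T (rcons t k) ->
  ole (OL (fun k => if T (rcons t k) then OS (r k) else OZ)) (oadd l n) ->
  ole (OS (r k)) (oadd l n).
Proof.
move=> Hk H; apply: ole_trans H.
apply: (ole_cocone (k := k)); rewrite Hk; exact: ole_refl.
Qed.

Lemma claim (Y : Type) (tau : topology Y) (T : pred (seq nat)) :
  is_tree T -> forall t r, leaf_rank T t r ->
  forall l n (D : seq nat -> Y -> Prop), limit_or_zero l -> oeq r (oadd l n) ->
  (forall s, is_closed tau (D s)) ->
  Fclass tau (oadd l (2 * n)) (R_T (Tsub T t) D).
Proof.
move=> HT t r Hr; elim: Hr => {t r} t r Hch IH l n D Hl [He1 He2] HD.
case: (classic (exists k, T (rcons t k))) => [[k0 Hk0]|Hno].
-
  have Hdec : forall k, exists p : ord * nat, limit_or_zero p.1 /\ oeq (r k) (oadd p.1 p.2).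
    move=> k; case: (decomp (r k)) => l' [n' [H1 H2]]; by exists (l', n').
  pose dl k := proj1_sig (constructive_indefinite_description _ (Hdec k)).
  have Hdl k : limit_or_zero (dl k).1 /\ oeq (r k) (oadd (dl k).1 (dl k).2)
    := proj2_sig (constructive_indefinite_description _ (Hdec k)).
  pose c k := oadd (dl k).1 (2 * (dl k).2).
  have Hc : forall k, T (rcons t k) -> olt (OS (c k)) (oadd l (2 * n)).
    move=> k Hk; rewrite /olt /c -!oaddS.
    apply: lemA => //; first exact: (proj1 (Hdl k)).
    apply: ole_trans (child_bound Hk He1).
    rewrite oaddS; apply: ole_succ; exact: (proj2 (proj2 (Hdl k))).
  pose sj j := odflt [::] (unpickle j : option (seq nat)).
  pose U k := fun y => exists j, (if size (sj j) == k
       then R_T (Tsub T (rcons t k)) (Dsh D (sj j)) else (fun _ => False)) y.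
  have HU : forall k, T (rcons t k) -> Fclass tau (OS (c k)) (U k).
    move=> k Hk.
    apply: (F_union (b := fun _ => c k)
      (B := fun j => if size (sj j) == k
       then R_T (Tsub T (rcons t k)) (Dsh D (sj j)) else (fun _ => False))) => //.
    + apply: ole_succ; exact: ole_zero.
    + exact: odd_odd (proj1 (Hdl k)).
    + move=> _; exact: ole_refl.
    + move=> j; case: (size (sj j) == k).
      * apply: (IH k Hk) => //; first exact: (proj1 (Hdl k)).
        exact: (proj2 (Hdl k)). by move=> s; exact: HD.
      * apply: closed_any; exact: closed_empty.
  have Hpos : olt OZ (oadd l (2 * n)).
    apply: ole_trans _ (Hc k0 Hk0); apply: ole_succ; exact: ole_zero.
  apply: (F_inter (b := fun m => match m with 0 => OZ | k.+1 =>
               if T (rcons t k) then OS (c k) else OZ end)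
     (B := fun m => match m with 0 => D [::] | k.+1 =>
               if T (rcons t k) then U k else D [::] end)) => //.
  + exact: not_odd_even.
  + move=> [|k] //; case E: (T (rcons t k)) => //; exact: Hc.
  + move=> [|k]; first by apply: F_zero => //; exact: ole_refl.
    case E: (T (rcons t k)); first exact: HU.
    by apply: F_zero => //; exact: ole_refl.
  + move=> y; rewrite decompR //; split.
    * move=> [H0 H] [|k] //; case E: (T (rcons t k)) => //.
      case: (H k E) => s [Hs HR]; exists (pickle s).
      by rewrite /sj pickleK /= Hs eqxx.
    * move=> H; split; first exact: (H 0).
      move=> k Hk; have := H k.+1; rewrite Hk => [[j]].
      case E: (size (sj j) == k) => // HR; exists (sj j); split => //.
      exact/eqP.
-
  have Hz : ole (oadd l n) OZ.
    apply: ole_trans He2 _; apply: ole_limiting => k.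
    case E: (T (rcons t k)); last exact: ole_zero.
    by exfalso; apply: Hno; exists k.
  case: n Hz {He1 He2} => [|n] Hz; last by exfalso; exact: not_S_le_Z Hz.
  apply: (Fclass_ext (A := D [::])).
    move=> y; rewrite decompR //; split => [H|[H _]] //; split => // k Hk.
    by exfalso; apply: Hno; exists k.
  by apply: F_zero.
Qed.

Lemma fin_max (P : nat -> bool) (f : nat -> ord) N :
  (exists k, P k /\ k < N) ->
  exists m, P m /\ forall k, P k -> k < N -> ole (f k) (f m).
Proof.
elim: N => [|N IH]; first by case=> k [_].
case=> k [Pk HkN].
case: (classic (exists k, P k /\ k < N)) => [H|H].
- case: (IH H) => m [Pm Hm].
  case PN: (P N).
  + case: (ole_total (f N) (f m)) => HNm.
    * exists m; split => // j Pj; rewrite ltnS leq_eqVlt; case/orP => [/eqP ->//|]; exact: Hm.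
    * exists N; split => // j Pj; rewrite ltnS leq_eqVlt; case/orP => [/eqP ->|Hj].
        exact: ole_refl.
      exact: ole_trans (Hm j Pj Hj) (olt_ole HNm).
  + exists m; split => // j Pj; rewrite ltnS leq_eqVlt; case/orP => [/eqP E|]; last exact: Hm.
    by rewrite E PN in Pj.
- exists N; have E : k = N.
    apply/eqP; rewrite eqn_leq -ltnS HkN /=; rewrite leqNgt; apply/negP => Hk.
    by apply: H; exists k.
  subst k; split => // j Pj; rewrite ltnS leq_eqVlt; case/orP => [/eqP ->|Hj].
    exact: ole_refl.
  by exfalso; apply: H; exists j.
Qed.

Lemma part2 (Y : Type) (tau : topology Y) (T : pred (seq nat)) t r :
  is_tree T -> leaf_rank T t r -> (exists k, T (rcons t k)) ->
  (exists N, forall k, T (rcons t k) -> k < N) ->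
  forall l n (D : seq nat -> Y -> Prop), limit_or_zero l -> oeq r (oadd l n) ->
  (forall s, is_closed tau (D s)) ->
  1 <= n /\ Fclass tau (oadd l (2 * n - 1)) (R_T (Tsub T t) D).
Proof.
move=> HT Hr; case: Hr => {t r} t r Hch [k0 Hk0] [N HN] l n D Hl [He1 He2] HD.
have Hn : 1 <= n.
  case: n He1 He2 => // He1 He2; exfalso.
  case: (@fin_max (fun k => T (rcons t k)) r N); first by exists k0; split => //; exact: HN.
  move=> m [Pm Hm].
  have Hm1 : olt (r m) l by exact: (child_bound Pm He1).
  have := olt_L_inv (ole_trans (Hl _ Hm1) He2) => [[j]].
  case Ej: (T (rcons t j)); last by move/not_S_le_Z.
  rewrite /olt => /ole_S_inv Hj.
  apply: (@olt_irrefl (r m)); apply: ole_trans Hj _; exact: Hm (HN j Ej).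
split => //.
case: n Hn He1 He2 => // n _ He1 He2.
have -> : 2 * n.+1 - 1 = (2 * n).+1 by lia.
have Hdec : forall k, exists p : ord * nat, limit_or_zero p.1 /\ oeq (r k) (oadd p.1 p.2).
  move=> k; case: (decomp (r k)) => l' [n' [H1 H2]]; by exists (l', n').
pose dl k := proj1_sig (constructive_indefinite_description _ (Hdec k)).
have Hdl k : limit_or_zero (dl k).1 /\ oeq (r k) (oadd (dl k).1 (dl k).2)
  := proj2_sig (constructive_indefinite_description _ (Hdec k)).
pose c := oadd l (2 * n).
have Hc : forall k, T (rcons t k) -> ole (oadd (dl k).1 (2 * (dl k).2)) c.
  move=> k Hk.
  have H := lemA (proj1 (Hdl k)) Hl (ole_trans _ (child_bound Hk He1)).
  have H' : ole (oadd (dl k).1 (2 * (dl k).2).+2) (oadd l (2 * n.+1)).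
    apply: H; rewrite oaddS; apply: ole_succ; exact: (proj2 (proj2 (Hdl k))).
  move: H'; have -> : 2 * n.+1 = (2 * n).+2 by lia.
  by rewrite !oaddS => /ole_S_inv /ole_S_inv.
pose sg j k := nth [::] (odflt [::] (unpickle j : option (seq (seq nat)))) k.
pose E j m := match m with 0 => D [::] | k.+1 =>
   if T (rcons t k) then
     (if size (sg j k) == k then R_T (Tsub T (rcons t k)) (Dsh D (sg j k))
      else (fun _ => False))
   else D [::] end.
have HP : forall j, Fclass tau c (fun y => forall m, E j m y).
  move=> j; apply: inter_even; first exact: not_odd_even.
  move=> [|k]; first by exists OZ; split; [exact: ole_zero | apply: F_zero; [exact: ole_refl | exact: HD]].
  rewrite /E; case Ek: (T (rcons t k)); last first.
    by exists OZ; split; [exact: ole_zero | apply: F_zero; [exact: ole_refl | exact: HD]].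
  case: (size (sg j k) == k).
  + exists (oadd (dl k).1 (2 * (dl k).2)); split; first exact: Hc.
    apply: (claim HT (Hch k Ek)); first exact: (proj1 (Hdl k)).
      exact: (proj2 (Hdl k)).
    by move=> s; exact: HD.
  + exists OZ; split; first exact: ole_zero.
    apply: F_zero; [exact: ole_refl | exact: closed_empty].
apply: (F_union (b := fun _ => c) (B := fun j y => forall m, E j m y)) => //.
- apply: ole_succ; exact: ole_zero.
- exact: odd_odd.
- move=> _; exact: ole_refl.
- move=> y; rewrite decompR //; split.
  + move=> [H0 H].
    have Hs : forall k, exists s, T (rcons t k) -> size s = k /\ R_T (Tsub T (rcons t k)) (Dsh D s) y.
      move=> k; case Ek: (T (rcons t k)); last by exists [::].
      case: (H k Ek) => s Hs; by exists s.
    pose sk k := proj1_sig (constructive_indefinite_description _ (Hs k)).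
    have Hsk k : T (rcons t k) -> size (sk k) = k /\ R_T (Tsub T (rcons t k)) (Dsh D (sk k)) y
      := proj2_sig (constructive_indefinite_description _ (Hs k)).
    exists (pickle (mkseq sk N)) => [[|k]] //=.
    case Ek: (T (rcons t k)) => //.
    have -> : sg (pickle (mkseq sk N)) k = sk k.
      by rewrite /sg pickleK /= nth_mkseq //; exact: HN.
    case: (Hsk k Ek) => -> HR; by rewrite eqxx.
  + move=> [j H]; split; first exact: (H 0).
    move=> k Hk; have := H k.+1; rewrite /E Hk.
    case Es: (size (sg j k) == k) => // HR; exists (sg j k); split => //.
    exact/eqP.
Qed.

Theorem lemma6p5 (Y : Type) (tau : topology Y) (C : seq nat -> Y -> Prop)
  (T : pred (seq nat)) (l a : ord) (n : nat) :
  suslin_scheme C ->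
  (forall s, is_closed tau (C s)) ->
  is_tree T -> T [::] -> well_founded_tree T ->
  leaf_rank T [::] a -> limit_or_zero l -> oeq a (oadd l n) ->
  Fclass tau (oadd l (2 * n)) (R_T T C) /\
  ((exists t, T t /\ t <> [::]) ->
   (exists N, forall k, T [:: k] -> k < N) ->
   1 <= n /\ Fclass tau (oadd l (2 * n - 1)) (R_T T C)).
Proof.
move=> _ HC HT _ _ Ha Hl He; split.
- exact: (claim HT Ha Hl He HC).
- move=> [[|k u] [Hu Hne]] //= [N HN].
  apply: (part2 HT Ha _ _ Hl He HC).
  + exists k; rewrite /=; exact: (HT [:: k] u Hu).
  + by exists N.
Qed.
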